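(* Let $M_0$ be an r-oriented two-sided associative cone in $\mathbb{R}^7$, written as $M_0=\{r\phi(\sigma):\sigma\in\Sigma,r\in\mathbb{R}\}$ for a real analytic map $\phi:\Sigma\to S^6$ from a Riemann surface $\Sigma$ (with the complex structure induced by $\phi^*g$ and the orientation making $\varphi(\phi,\partial_s\phi,\partial_t\phi)>0$ for positive coordinates). Let $w$ be a holomorphic vector field on $\Sigma$ and set $\psi=\mathcal{L}_w\phi:\Sigma\to\mathbb{R}^7$, the Lie derivative of $\phi$ along $w$. Then $M=\{r\phi(\sigma)+\psi(\sigma):\sigma\in\Sigma,r\in\mathbb{R}\}$ is an r-oriented ruled associative 3-fold in $\mathbb{R}^7$ with asymptotic cone $M_0$.
   Context: Let $(x_1,\dots,x_7)$ be coordinates on $\mathbb{R}^7$ with Euclidean metric $g$, $dx_{ijk}=dx_i\wedge dx_j\wedge dx_k$, and $\varphi=dx_{123}+dx_{145}+dx_{167}+dx_{246}-dx_{257}-dx_{347}-dx_{356}$. An oriented 3-dimensional (immersed) submanifold $N$ is associative if $\varphi|_{T_xN}=\mathrm{vol}_{T_xN}$ for all $x\in N$. A cone is a submanifold invariant under dilations, nonsingular except possibly at $0$; it is two-sided if $C=-C$. An r-oriented ruled submanifold is one of the form $\{r\phi(\sigma)+\psi(\sigma):\sigma\in\Sigma,r\in\mathbb{R}\}$ with $\phi:\Sigma\to S^6$, $\psi:\Sigma\to\mathbb{R}^7$, viewed as the union of the affine lines through $\psi(\sigma)$ with oriented unit direction $\phi(\sigma)$; its asymptotic cone is $\{r\phi(\sigma):\sigma\in\Sigma,r\in\mathbb{R}\}$.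 An r-oriented two-sided cone is an r-oriented ruled submanifold with $\psi\equiv0$. *)

(* Defs.v *)
From Stdlib Require Import Reals Lra List.
From Coquelicot Require Import Coquelicot.
Open Scope R_scope.

(* Vectors of R^7: components x_1..x_7 are stored at indices 0..6. *)
Definition vec7 := nat -> R.

Definition dot7 (u v : vec7) : R :=
  u 0%nat * v 0%nat + u 1%nat * v 1%nat + u 2%nat * v 2%nat + u 3%nat * v 3%nat
  + u 4%nat * v 4%nat + u 5%nat * v 5%nat + u 6%nat * v 6%nat.

Definition norm7 (u : vec7) : R := sqrt (dot7 u u).

(* dx_i ∧ dx_j ∧ dx_k evaluated on (u,v,w), with 1-based coordinate indices *)
Definition dx3 (i j k : nat) (u v w : vec7) : R :=
  let a := fun (x : vec7) (n : nat) => x (n - 1)%nat in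
  a u i * (a v j * a w k - a v k * a w j)
  - a u j * (a v i * a w k - a v k * a w i)
  + a u k * (a v i * a w j - a v j * a w i).

Definition phi3 (u v w : vec7) : R :=
  dx3 1 2 3 u v w + dx3 1 4 5 u v w + dx3 1 6 7 u v w + dx3 2 4 6 u v w
  - dx3 2 5 7 u v w - dx3 3 4 7 u v w - dx3 3 5 6 u v w.

(* Gram determinant of three vectors: vol(u,v,w) = sqrt (gram3 u v w) *)
Definition gram3 (u v w : vec7) : R :=
  let a := dot7 u u in let b := dot7 u v in let c := dot7 u w in
  let d := dot7 v v in let e := dot7 v w in let f := dot7 w w in
  a * (d * f - e * e) - b * (b * f - e * c) + c * (b * e - d * c).

Definition d_s (f : C -> vec7) (z : C) : vec7 :=
  fun i => Derive (fun x => f (x, snd z) i) (fst z).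
Definition d_t (f : C -> vec7) (z : C) : vec7 :=
  fun i => Derive (fun y => f (fst z, y) i) (snd z).

Definition pd_r (F : R -> C -> vec7) (r : R) (z : C) : vec7 :=
  fun i => Derive (fun x => F x z i) r.
Definition pd_s (F : R -> C -> vec7) (r : R) (z : C) : vec7 :=
  fun i => Derive (fun x => F r (x, snd z) i) (fst z).
Definition pd_t (F : R -> C -> vec7) (r : R) (z : C) : vec7 :=
  fun i => Derive (fun y => F r (fst z, y) i) (snd z).

Definition immersion_at (F : R -> C -> vec7) (r : R) (z : C) : Prop :=
  (forall i, ex_derive (fun x => F x z i) r) /\
  (forall i, ex_derive (fun x => F r (x, snd z) i) (fst z)) /\
  (forall i, ex_derive (fun y => F r (fst z, y) i) (snd z)) /\
  gram3 (pd_r F r z) (pd_s F r z) (pd_t F r z) > 0.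

(* The immersed 3-fold parametrized by F on R x U, oriented by the
   parametrization (dr, ds, dt), is associative at all its nonsingular points:
   φ restricted to the tangent space equals the volume form, i.e.
   φ(F_r, F_s, F_t) = vol(F_r, F_s, F_t) = sqrt(Gram). *)
Definition associative_param (D : R -> C -> Prop) (F : R -> C -> vec7) : Prop :=
  forall r z, D r z -> immersion_at F r z ->
    phi3 (pd_r F r z) (pd_s F r z) (pd_t F r z)
    = sqrt (gram3 (pd_r F r z) (pd_s F r z) (pd_t F r z)).

(* Iterated partial derivatives of a real function of z = (s,t):
   true = d/ds, false = d/dt. *)
Fixpoint dpart (l : list bool) (g : C -> R) : C -> R :=
  match l with
  | nil => g
  | b :: l' => let h := dpart l' g in
      if b then (fun z => Derive (fun x => h (x, snd z)) (fst z))
      else (fun z => Derive (fun y => h (fst z, y)) (snd z))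
  end.

Definition smooth_on (U : C -> Prop) (g : C -> R) : Prop :=
  forall (l : list bool) (z : C), U z ->
    ex_derive (fun x => dpart l g (x, snd z)) (fst z) /\
    ex_derive (fun y => dpart l g (fst z, y)) (snd z) /\
    continuous (dpart l g) z.

Definition real_analytic_on (U : C -> Prop) (g : C -> R) : Prop :=
  forall z0 : C, U z0 -> exists (rho : R) (c : nat -> nat -> R),
    0 < rho /\
    (forall n, ex_series (fun m => Rabs (c n m) * rho ^ (n + m))) /\
    ex_series (fun n => Series (fun m => Rabs (c n m) * rho ^ (n + m))) /\
    forall z : C, Rabs (fst z - fst z0) < rho -> Rabs (snd z - snd z0) < rho ->
      g z = Series (fun n => Series (fun m =>
               c n m * (fst z - fst z0) ^ n * (snd z - snd z0) ^ m)).

Definition holomorphic_on (U : C -> Prop) (w : C -> C) : Prop :=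
  forall z, U z -> @ex_derive C_AbsRing C_NormedModule w z.

Definition ruled_set (U : C -> Prop) (phi psi : C -> vec7) (x : vec7) : Prop :=
  exists r z, U z /\ forall i, x i = r * phi z i + psi z i.
Definition asymptotic_cone (U : C -> Prop) (phi psi : C -> vec7) (x : vec7) : Prop :=
  exists r z, U z /\ forall i, x i = r * phi z i.
Definition cone_set (U : C -> Prop) (phi : C -> vec7) (x : vec7) : Prop :=
  exists r z, U z /\ forall i, x i = r * phi z i.

(* Lie derivative of phi along the real vector field w = a d/ds + b d/dt,
   where w = a + i b as a complex function *)
Definition lie_deriv (w : C -> C) (phi : C -> vec7) (z : C) : vec7 :=
  fun i => fst (w z) * d_s phi z i + snd (w z) * d_t phi z i.

(* Main.v *)
Require Import Defs.
From Stdlib Require Import Reals Lra Lia List.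
From Coquelicot Require Import Coquelicot.
Open Scope R_scope.

Definition cross (u v : vec7) : vec7 := fun k =>
  match k with
  | 0%nat => (u 1%nat * v 2%nat - u 2%nat * v 1%nat) + (u 3%nat * v 4%nat - u 4%nat * v 3%nat) + (u 5%nat * v 6%nat - u 6%nat * v 5%nat)
  | 1%nat => (u 2%nat * v 0%nat - u 0%nat * v 2%nat) + (u 3%nat * v 5%nat - u 5%nat * v 3%nat) - (u 4%nat * v 6%nat - u 6%nat * v 4%nat)
  | 2%nat => (u 0%nat * v 1%nat - u 1%nat * v 0%nat) - (u 3%nat * v 6%nat - u 6%nat * v 3%nat) - (u 4%nat * v 5%nat - u 5%nat * v 4%nat)
  | 3%nat => (u 4%nat * v 0%nat - u 0%nat * v 4%nat) + (u 5%nat * v 1%nat - u 1%nat * v 5%nat) - (u 6%nat * v 2%nat - u 2%nat * v 6%nat)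
  | 4%nat => (u 0%nat * v 3%nat - u 3%nat * v 0%nat) - (u 6%nat * v 1%nat - u 1%nat * v 6%nat) - (u 5%nat * v 2%nat - u 2%nat * v 5%nat)
  | 5%nat => (u 6%nat * v 0%nat - u 0%nat * v 6%nat) + (u 1%nat * v 3%nat - u 3%nat * v 1%nat) - (u 2%nat * v 4%nat - u 4%nat * v 2%nat)
  | 6%nat => (u 0%nat * v 5%nat - u 5%nat * v 0%nat) - (u 1%nat * v 4%nat - u 4%nat * v 1%nat) - (u 2%nat * v 3%nat - u 3%nat * v 2%nat)
  | _ => 0
  end.

Lemma cross_phi3 u v w : phi3 u v w = dot7 (cross u v) w.
Proof. unfold phi3, dx3, dot7, cross; simpl. ring. Qed.

Lemma lagrange u v : dot7 (cross u v) (cross u v) = dot7 u u * dot7 v v - dot7 u v * dot7 u v.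
Proof. unfold dot7, cross. ring. Qed.

Lemma cross_orth u v : dot7 (cross u v) u = 0.
Proof. unfold dot7, cross. ring. Qed.

Lemma cross_anti u v k : cross u v k = - cross v u k.
Proof. destruct k as [|[|[|[|[|[|[|k]]]]]]]; simpl; ring. Qed.

Lemma cross_double u v k : (k < 7)%nat -> cross u (cross u v) k = - dot7 u u * v k + dot7 u v * u k.
Proof. intro H. unfold dot7.
 destruct k as [|[|[|[|[|[|[|k]]]]]]]; try (simpl; ring); lia. Qed.

Lemma dot7_ext u u' v v' : (forall i, (i<7)%nat -> u i = u' i) -> (forall i, (i<7)%nat -> v i = v' i) ->
  dot7 u v = dot7 u' v'.
Proof. intros H1 H2. unfold dot7. rewrite !H1, !H2 by lia. reflexivity. Qed.

Lemma phi3_ext u u' v v' w w' : (forall i, (i<7)%nat -> u i = u' i) -> (forall i, (i<7)%nat -> v i = v' i) ->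
  (forall i, (i<7)%nat -> w i = w' i) -> phi3 u v w = phi3 u' v' w'.
Proof. intros H1 H2 H3. rewrite !cross_phi3. apply dot7_ext; auto.
 intros i Hi. destruct i as [|[|[|[|[|[|[|k]]]]]]]; simpl; try lia; rewrite !H1, !H2 by lia; reflexivity. Qed.

Lemma gram3_ext u u' v v' w w' : (forall i, (i<7)%nat -> u i = u' i) -> (forall i, (i<7)%nat -> v i = v' i) ->
  (forall i, (i<7)%nat -> w i = w' i) -> gram3 u v w = gram3 u' v' w'.
Proof. intros H1 H2 H3. unfold gram3.
 rewrite (dot7_ext u u' u u'), (dot7_ext u u' v v'), (dot7_ext u u' w w'), (dot7_ext v v' v v'),
   (dot7_ext v v' w w'), (dot7_ext w w' w w') by auto. reflexivity. Qed.

Lemma dot7_nonneg u : 0 <= dot7 u u.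
Proof. unfold dot7. nra. Qed.

Lemma final_alg p v w mu : dot7 p p = 1 ->
  (forall i, (i<7)%nat -> w i = cross p v i + mu * p i) -> phi3 p v w = sqrt (gram3 p v w).
Proof.
  intros Hp Hw.
  rewrite (phi3_ext p p v v w (fun i => cross p v i + mu * p i)) by auto.
  rewrite (gram3_ext p p v v w (fun i => cross p v i + mu * p i)) by auto.
  rewrite cross_phi3.
  assert (E1 : forall a, dot7 a (fun i => cross p v i + mu * p i) = dot7 a (cross p v) + mu * dot7 a p)
    by (intros; unfold dot7; ring).
  assert (S : forall a b, dot7 a b = dot7 b a) by (intros; unfold dot7; ring).
  assert (O2 : dot7 (cross p v) v = 0) by (unfold dot7, cross; ring).
  pose proof (cross_orth p v) as O1. pose proof (lagrange p v) as L.
  unfold gram3. rewrite !E1.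
  rewrite (S (fun i => cross p v i + mu * p i)), E1.
  rewrite (S p (cross p v)), (S v (cross p v)), (S v p), O1, O2, L, Hp.
  pose proof (dot7_nonneg (cross p v)) as N. rewrite L, Hp in N.
  match goal with |- _ = sqrt ?g => replace g with
   ((1 * dot7 v v - dot7 p v * dot7 p v) * (1 * dot7 v v - dot7 p v * dot7 p v)) end.
  - rewrite sqrt_square by lra. ring.
  - rewrite (S _ p), E1, (S p (cross p v)), O1, Hp. ring.
Qed.
Lemma holo_s (w : C -> C) z l : @is_derive C_AbsRing C_NormedModule w z l -> forall eps, 0<eps -> exists delta, 0<delta /\
  forall h, Rabs h < delta -> Cmod (Cminus (Cminus (w (fst z + h, snd z)) (w z)) (h * fst l, h * snd l)) <= eps * Rabs h.
Proof.
  intros [_ H] eps Heps.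
  specialize (H z (fun P HP => HP) (mkposreal eps Heps)).
  destruct H as [d Hd]. exists d. split. apply cond_pos.
  intros h Hh. specialize (Hd (fst z + h, snd z)).
  destruct z as [s t]. simpl in *.
  assert (E : Cminus (s + h, t) (s, t) = RtoC h).
  { apply injective_projections; simpl; ring. }
  assert (B : @ball (AbsRing_UniformSpace C_AbsRing) (s, t) d (s + h, t)).
  { change (Cmod (Cminus (s + h, t) (s, t)) < d). rewrite E, Cmod_R. exact Hh. }
  specialize (Hd B).
  change (Cmod (Cminus (Cminus (w (s + h, t)) (w (s, t))) (Cmult (Cminus (s + h, t) (s, t)) l))
     <= eps * Cmod (Cminus (s + h, t) (s, t))) in Hd.
  rewrite E, Cmod_R in Hd.
  eapply Rle_trans; [|exact Hd]. right. f_equal. f_equal.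
  apply injective_projections; simpl; ring.
Qed.
Lemma holo_t (w : C -> C) z l : @is_derive C_AbsRing C_NormedModule w z l -> forall eps, 0<eps -> exists delta, 0<delta /\
  forall h, Rabs h < delta -> Cmod (Cminus (Cminus (w (fst z, snd z + h)) (w z)) (- h * snd l, h * fst l)) <= eps * Rabs h.
Proof.
  intros [_ H] eps Heps.
  specialize (H z (fun P HP => HP) (mkposreal eps Heps)).
  destruct H as [d Hd]. exists d. split. apply cond_pos.
  intros h Hh. specialize (Hd (fst z, snd z + h)).
  destruct z as [s t]. simpl in *.
  assert (E : Cminus (s, t + h) (s, t) = (0, h)).
  { apply injective_projections; simpl; ring. }
  assert (Ch : Cmod (0, h) = Rabs h).
  { unfold Cmod. simpl. rewrite <- sqrt_Rsqr_abs. f_equal. unfold Rsqr. ring. }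
  assert (B : @ball (AbsRing_UniformSpace C_AbsRing) (s, t) d (s, t + h)).
  { change (Cmod (Cminus (s, t + h) (s, t)) < d). rewrite E, Ch. exact Hh. }
  specialize (Hd B).
  change (Cmod (Cminus (Cminus (w (s, t + h)) (w (s, t))) (Cmult (Cminus (s, t + h) (s, t)) l))
     <= eps * Cmod (Cminus (s, t + h) (s, t))) in Hd.
  rewrite E, Ch in Hd.
  eapply Rle_trans; [|exact Hd]. right. f_equal. f_equal.
  apply injective_projections; simpl; ring.
Qed.
Lemma im_le_Cmod (c : C) : Rabs (snd c) <= Cmod c.
Proof. eapply Rle_trans; [apply Rmax_r|apply Rmax_Cmod]. Qed.

Lemma deriv_of_eps (f : R -> R) x l :
  (forall eps, 0 < eps -> exists delta, 0 < delta /\ forall h, Rabs h < delta ->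
     Rabs (f (x + h) - f x - h * l) <= eps * Rabs h) -> is_derive f x l.
Proof.
  intros H. apply is_derive_Reals. intros eps Heps.
  destruct (H (eps/2)) as [d [Hd Hh]]; [lra|].
  exists (mkposreal d Hd). intros h Hn Hlt. simpl in Hlt.
  specialize (Hh h Hlt).
  assert (Ha : 0 < Rabs h) by (apply Rabs_pos_lt; auto).
  replace ((f (x + h) - f x) / h - l) with ((f (x + h) - f x - h * l) / h) by (field; auto).
  unfold Rdiv. rewrite Rabs_mult, Rabs_inv.
  apply Rle_lt_trans with (eps/2 * Rabs h * / Rabs h).
  - apply Rmult_le_compat_r; [left; apply Rinv_0_lt_compat; auto | auto].
  - field_simplify; lra.
Qed.

Lemma holo_partials (w : C -> C) z l : @is_derive C_AbsRing C_NormedModule w z l ->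
  is_derive (fun x => fst (w (x, snd z))) (fst z) (fst l) /\
  is_derive (fun x => snd (w (x, snd z))) (fst z) (snd l) /\
  is_derive (fun y => fst (w (fst z, y))) (snd z) (- snd l) /\
  is_derive (fun y => snd (w (fst z, y))) (snd z) (fst l).
Proof.
  intro H. pose proof (holo_s w z l H) as Hs. pose proof (holo_t w z l H) as Ht.
  destruct z as [s t]. simpl in *.
  split; [|split; [|split]]; apply deriv_of_eps; intros eps Heps.
  - destruct (Hs eps Heps) as [d [Hd Hh]]. exists d; split; auto. intros h Hl.
    eapply Rle_trans; [|apply (Hh h Hl)]. eapply Rle_trans; [|apply re_le_Cmod]. simpl. right. f_equal; lra.
  - destruct (Hs eps Heps) as [d [Hd Hh]]. exists d; split; auto. intros h Hl.
    eapply Rle_trans; [|apply (Hh h Hl)]. eapply Rle_trans; [|apply im_le_Cmod]. simpl. right. f_equal; lra.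
  - destruct (Ht eps Heps) as [d [Hd Hh]]. exists d; split; auto. intros h Hl.
    eapply Rle_trans; [|apply (Hh h Hl)]. eapply Rle_trans; [|apply re_le_Cmod]. simpl. right. f_equal; lra.
  - destruct (Ht eps Heps) as [d [Hd Hh]]. exists d; split; auto. intros h Hl.
    eapply Rle_trans; [|apply (Hh h Hl)]. eapply Rle_trans; [|apply im_le_Cmod]. simpl. right. f_equal; lra.
Qed.

Lemma dmul (f g : R -> R) x df dg : is_derive f x df -> is_derive g x dg ->
  is_derive (fun t => f t * g t) x (df * g x + f x * dg).
Proof. intros H1 H2. apply (is_derive_mult f g x df dg H1 H2). intros; apply Rmult_comm. Qed.
Lemma dplus (f g : R -> R) x df dg : is_derive f x df -> is_derive g x dg ->
  is_derive (fun t => f t + g t) x (df + dg).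
Proof. intros H1 H2. apply (is_derive_plus f g x df dg H1 H2). Qed.
Lemma dminus (f g : R -> R) x df dg : is_derive f x df -> is_derive g x dg ->
  is_derive (fun t => f t - g t) x (df - dg).
Proof. intros H1 H2. apply (is_derive_minus f g x df dg H1 H2). Qed.
Lemma dconst (c : R) x : is_derive (fun _ : R => c) x 0.
Proof. apply (is_derive_const c x). Qed.
Lemma did x : is_derive (fun t : R => t) x 1.
Proof. apply (is_derive_id x). Qed.
Lemma deq (f : R -> R) (x l l2 : R) : is_derive f x l -> @eq R l l2 -> is_derive f x l2.
Proof. intros H ->; exact H. Qed.

Ltac dsolve := match goal with
 | |- is_derive (fun _ => ?c) _ _ => apply dconst
 | |- is_derive (fun t => t) _ _ => apply did
 | |- is_derive (fun t => @?a t - @?b t) _ _ => apply dminus; dsolve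
 | |- is_derive (fun t => @?a t + @?b t) _ _ => apply dplus; dsolve
 | |- is_derive (fun t => @?a t * @?b t) _ _ => apply dmul; dsolve
 | |- _ => eassumption
 end.

Lemma cross_deriv (f g : R -> vec7) f' g' x0 :
  (forall i, (i<7)%nat -> is_derive (fun x => f x i) x0 (f' i)) ->
  (forall i, (i<7)%nat -> is_derive (fun x => g x i) x0 (g' i)) ->
  forall k, (k<7)%nat -> is_derive (fun x => cross (f x) (g x) k) x0 (cross f' (g x0) k + cross (f x0) g' k).
Proof.
  intros Hf Hg k Hk.
  pose proof (Hf 0%nat ltac:(lia)). pose proof (Hf 1%nat ltac:(lia)). pose proof (Hf 2%nat ltac:(lia)).
  pose proof (Hf 3%nat ltac:(lia)). pose proof (Hf 4%nat ltac:(lia)). pose proof (Hf 5%nat ltac:(lia)).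
  pose proof (Hf 6%nat ltac:(lia)).
  pose proof (Hg 0%nat ltac:(lia)). pose proof (Hg 1%nat ltac:(lia)). pose proof (Hg 2%nat ltac:(lia)).
  pose proof (Hg 3%nat ltac:(lia)). pose proof (Hg 4%nat ltac:(lia)). pose proof (Hg 5%nat ltac:(lia)).
  pose proof (Hg 6%nat ltac:(lia)).
  destruct k as [|[|[|[|[|[|[|k]]]]]]]; try lia; simpl; (eapply deq; [dsolve | cbv beta; ring]).
Qed.

Lemma dot_deriv (f g : R -> vec7) f' g' x0 :
  (forall i, (i<7)%nat -> is_derive (fun x => f x i) x0 (f' i)) ->
  (forall i, (i<7)%nat -> is_derive (fun x => g x i) x0 (g' i)) ->
  is_derive (fun x => dot7 (f x) (g x)) x0 (dot7 f' (g x0) + dot7 (f x0) g').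
Proof.
  intros Hf Hg.
  pose proof (Hf 0%nat ltac:(lia)). pose proof (Hf 1%nat ltac:(lia)). pose proof (Hf 2%nat ltac:(lia)).
  pose proof (Hf 3%nat ltac:(lia)). pose proof (Hf 4%nat ltac:(lia)). pose proof (Hf 5%nat ltac:(lia)).
  pose proof (Hf 6%nat ltac:(lia)).
  pose proof (Hg 0%nat ltac:(lia)). pose proof (Hg 1%nat ltac:(lia)). pose proof (Hg 2%nat ltac:(lia)).
  pose proof (Hg 3%nat ltac:(lia)). pose proof (Hg 4%nat ltac:(lia)). pose proof (Hg 5%nat ltac:(lia)).
  pose proof (Hg 6%nat ltac:(lia)).
  unfold dot7. eapply deq; [dsolve | cbv beta; ring].
Qed.

Lemma cross_self u k : cross u u k = 0.
Proof. destruct k as [|[|[|[|[|[|[|k]]]]]]]; simpl; ring. Qed.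

Lemma cross_double2 u v k : (k < 7)%nat -> cross (cross u v) v k = - dot7 v v * u k + dot7 u v * v k.
Proof. intro H. unfold dot7.
 destruct k as [|[|[|[|[|[|[|k]]]]]]]; try (simpl; ring); lia. Qed.

Lemma cross_ext u u' v v' k : (forall i, (i<7)%nat -> u i = u' i) -> (forall i, (i<7)%nat -> v i = v' i) ->
  cross u v k = cross u' v' k.
Proof. intros H1 H2.
 destruct k as [|[|[|[|[|[|[|k]]]]]]]; simpl; try reflexivity; rewrite !H1, !H2 by lia; reflexivity. Qed.

Lemma cross_lin5 u (x1 x2 x3 x4 : vec7) r c1 c2 c3 c4 k :
  cross u (fun j => r * x1 j + (c1 * x1 j + c2 * x2 j + c3 * x3 j + c4 * x4 j)) k =
  r * cross u x1 k + c1 * cross u x1 k + c2 * cross u x2 k + c3 * cross u x3 k + c4 * cross u x4 k.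
Proof. destruct k as [|[|[|[|[|[|[|k]]]]]]]; simpl; ring. Qed.

Lemma dot0 u : dot7 u u = 0 -> forall i, (i<7)%nat -> u i = 0.
Proof. unfold dot7. intros H i Hi.
 destruct i as [|[|[|[|[|[|[|i]]]]]]]; try lia; nra. Qed.

Lemma dot7_sym a b : dot7 a b = dot7 b a.
Proof. unfold dot7; ring. Qed.

Lemma loc_2d (U : C -> Prop) (HU : open U) s t : U (s,t) -> locally_2d (fun u v => U (u,v)) s t.
Proof. intro Hz. apply locally_2d_locally. generalize (HU _ Hz). apply filter_imp. intros [u v] H. exact H. Qed.

Lemma loc_s (U : C -> Prop) (HU : open U) s t : U (s,t) -> locally s (fun x => U (x,t)).
Proof. intro Hz. apply (locally_2d_1d_const_y (fun u v => U (u,v))). apply loc_2d; auto. Qed.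
Lemma loc_t (U : C -> Prop) (HU : open U) s t : U (s,t) -> locally t (fun y => U (s,y)).
Proof. intro Hz. apply (locally_2d_1d_const_x (fun u v => U (u,v))). apply loc_2d; auto. Qed.

Lemma unit_U (U : C -> Prop) phi (Hsphere : forall z, U z -> norm7 (phi z) = 1) z : U z -> dot7 (phi z) (phi z) = 1.
Proof. intro Hz. pose proof (Hsphere z Hz) as H. unfold norm7 in H.
  rewrite <- (sqrt_sqrt (dot7 (phi z) (phi z))) by apply dot7_nonneg. rewrite H; ring. Qed.

Section S.
Variables (U : C -> Prop) (phi : C -> vec7).
Hypothesis (Hsmooth : forall i, (i < 7)%nat -> smooth_on U (fun z => phi z i)).

Lemma ds0 i s t : (i<7)%nat -> U (s,t) -> is_derive (fun x => phi (x,t) i) s (d_s phi (s,t) i).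
Proof. intros Hi Hz. destruct (Hsmooth i Hi nil (s,t) Hz) as [H _]. exact (Derive_correct _ _ H). Qed.
Lemma dt0 i s t : (i<7)%nat -> U (s,t) -> is_derive (fun y => phi (s,y) i) t (d_t phi (s,t) i).
Proof. intros Hi Hz. destruct (Hsmooth i Hi nil (s,t) Hz) as [_ [H _]]. exact (Derive_correct _ _ H). Qed.
Lemma dss i s t : (i<7)%nat -> U (s,t) ->
  is_derive (fun x => d_s phi (x,t) i) s (Derive (fun x => d_s phi (x,t) i) s).
Proof. intros Hi Hz. destruct (Hsmooth i Hi (true::nil) (s,t) Hz) as [H _]. exact (Derive_correct _ _ H). Qed.
Lemma dst i s t : (i<7)%nat -> U (s,t) ->
  is_derive (fun x => d_t phi (x,t) i) s (Derive (fun x => d_t phi (x,t) i) s).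
Proof. intros Hi Hz. destruct (Hsmooth i Hi (false::nil) (s,t) Hz) as [H _]. exact (Derive_correct _ _ H). Qed.
Lemma dts i s t : (i<7)%nat -> U (s,t) ->
  is_derive (fun y => d_s phi (s,y) i) t (Derive (fun y => d_s phi (s,y) i) t).
Proof. intros Hi Hz. destruct (Hsmooth i Hi (true::nil) (s,t) Hz) as [_ [H _]]. exact (Derive_correct _ _ H). Qed.
Lemma dtt i s t : (i<7)%nat -> U (s,t) ->
  is_derive (fun y => d_t phi (s,y) i) t (Derive (fun y => d_t phi (s,y) i) t).
Proof. intros Hi Hz. destruct (Hsmooth i Hi (false::nil) (s,t) Hz) as [_ [H _]]. exact (Derive_correct _ _ H). Qed.

Hypothesis (HU : open U).
Hypothesis (Hsphere : forall z, U z -> norm7 (phi z) = 1).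

Lemma orth_s s t : U (s,t) -> dot7 (phi (s,t)) (d_s phi (s,t)) = 0.
Proof.
  intro Hz.
  assert (H1 : is_derive (fun x => dot7 (phi (x,t)) (phi (x,t))) s
     (dot7 (d_s phi (s,t)) (phi (s,t)) + dot7 (phi (s,t)) (d_s phi (s,t)))).
  { apply dot_deriv; intros i Hi; apply ds0; auto. }
  assert (H2 : is_derive (fun x => dot7 (phi (x,t)) (phi (x,t))) s 0).
  { eapply is_derive_ext_loc; [| apply (dconst 1)].
    generalize (loc_s U HU s t Hz). apply filter_imp. intros x Hx.
    symmetry. apply (unit_U U phi Hsphere). exact Hx. }
  apply is_derive_unique in H1. apply is_derive_unique in H2.
  rewrite dot7_sym in H1. lra.
Qed.

Lemma orth_t s t : U (s,t) -> dot7 (phi (s,t)) (d_t phi (s,t)) = 0.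
Proof.
  intro Hz.
  assert (H1 : is_derive (fun y => dot7 (phi (s,y)) (phi (s,y))) t
     (dot7 (d_t phi (s,t)) (phi (s,t)) + dot7 (phi (s,t)) (d_t phi (s,t)))).
  { apply dot_deriv; intros i Hi; apply dt0; auto. }
  assert (H2 : is_derive (fun y => dot7 (phi (s,y)) (phi (s,y))) t 0).
  { eapply is_derive_ext_loc; [| apply (dconst 1)].
    generalize (loc_t U HU s t Hz). apply filter_imp. intros x Hx.
    symmetry. apply (unit_U U phi Hsphere). exact Hx. }
  apply is_derive_unique in H1. apply is_derive_unique in H2.
  rewrite dot7_sym in H1. lra.
Qed.

Hypothesis (Hconf1 : forall z, U z -> dot7 (d_s phi z) (d_s phi z) = dot7 (d_t phi z) (d_t phi z)).
Hypothesis (Hconf2 : forall z, U z -> dot7 (d_s phi z) (d_t phi z) = 0).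
Hypothesis (Himm : forall z, U z -> dot7 (d_s phi z) (d_s phi z) > 0).
Hypothesis (Hcone_imm : forall r z, U z -> r <> 0 -> immersion_at (fun r z i => r * phi z i) r z).
Hypothesis (Hcone_assoc : associative_param (fun r z => U z /\ r <> 0) (fun r z i => r * phi z i)).

Lemma cone_cross s t : U (s,t) -> forall k, (k<7)%nat ->
  d_t phi (s,t) k = cross (phi (s,t)) (d_s phi (s,t)) k.
Proof.
  intro Hz.
  pose proof (Hcone_assoc 1 (s,t) (conj Hz R1_neq_R0) (Hcone_imm 1 (s,t) Hz R1_neq_R0)) as HA.
  assert (Er : forall i, pd_r (fun r z i => r * phi z i) 1 (s,t) i = phi (s,t) i).
  { intro i. unfold pd_r. apply is_derive_unique. eapply deq; [dsolve|cbv beta; ring]. }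
  assert (Es : forall i, pd_s (fun r z i => r * phi z i) 1 (s,t) i = d_s phi (s,t) i).
  { intro i. unfold pd_s, d_s. apply Derive_ext. intro; ring. }
  assert (Et : forall i, pd_t (fun r z i => r * phi z i) 1 (s,t) i = d_t phi (s,t) i).
  { intro i. unfold pd_t, d_t. apply Derive_ext. intro; ring. }
  rewrite (phi3_ext _ (phi (s,t)) _ (d_s phi (s,t)) _ (d_t phi (s,t))) in HA by (intros; auto).
  rewrite (gram3_ext _ (phi (s,t)) _ (d_s phi (s,t)) _ (d_t phi (s,t))) in HA by (intros; auto).
  set (p := phi (s,t)) in *. set (e1 := d_s phi (s,t)) in *. set (e2 := d_t phi (s,t)) in *.
  assert (Hp : dot7 p p = 1) by (apply (unit_U U phi Hsphere); auto).
  assert (H1 : dot7 p e1 = 0) by (apply orth_s; auto).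
  assert (H2 : dot7 p e2 = 0) by (apply orth_t; auto).
  assert (H3 : dot7 e1 e2 = 0) by (apply Hconf2; auto).
  assert (H4 : dot7 e1 e1 = dot7 e2 e2) by (apply Hconf1; auto).
  assert (H5 : dot7 e1 e1 > 0) by (apply Himm; auto).
  unfold gram3 in HA. rewrite Hp, H1, H2, H3, <- H4 in HA.
  replace (1 * (dot7 e1 e1 * dot7 e1 e1 - 0 * 0) - 0 * (0 * dot7 e1 e1 - 0 * 0) +
      0 * (0 * 0 - dot7 e1 e1 * 0)) with (dot7 e1 e1 * dot7 e1 e1) in HA by ring.
  rewrite sqrt_square in HA by lra.
  rewrite cross_phi3 in HA.
  pose proof (lagrange p e1) as L. rewrite Hp, H1 in L.
  assert (D : dot7 (fun i => e2 i - cross p e1 i) (fun i => e2 i - cross p e1 i) = 0).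
  { replace (dot7 (fun i => e2 i - cross p e1 i) (fun i => e2 i - cross p e1 i)) with
      (dot7 e2 e2 - 2 * dot7 (cross p e1) e2 + dot7 (cross p e1) (cross p e1)) by (unfold dot7; ring).
    rewrite HA, L, <- H4. ring. }
  intros k Hk. pose proof (dot0 _ D k Hk) as E. simpl in E. lra.
Qed.

Lemma schwarz_phi i s t : (i<7)%nat -> U (s,t) ->
  Derive (fun y => d_s phi (s,y) i) t = Derive (fun x => d_t phi (x,t) i) s.
Proof.
  intros Hi Hz. symmetry.
  apply (Schwarz (fun u v => phi (u,v) i) s t).
  - apply locally_2d_impl with (P := fun u v => U (u,v)); [| apply loc_2d; auto].
    apply locally_2d_forall. intros u v Huv.
    destruct (Hsmooth i Hi nil (u,v) Huv) as [A1 [A2 _]].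
    destruct (Hsmooth i Hi (false::nil) (u,v) Huv) as [B1 _].
    destruct (Hsmooth i Hi (true::nil) (u,v) Huv) as [_ [C2 _]].
    split; [exact A1 | split; [exact A2 | split; [exact B1 | exact C2]]].
  - apply continuity_2d_pt_filterlim.
    destruct (Hsmooth i Hi (true::false::nil) (s,t) Hz) as [_ [_ Hc]]. exact Hc.
  - apply continuity_2d_pt_filterlim.
    destruct (Hsmooth i Hi (false::true::nil) (s,t) Hz) as [_ [_ Hc]]. exact Hc.
Qed.

Lemma Bcross s t k : (k<7)%nat -> U (s,t) ->
  Derive (fun x => d_t phi (x,t) k) s = cross (phi (s,t)) (fun i => Derive (fun x => d_s phi (x,t) i) s) k.
Proof.
  intros Hk Hz.
  assert (H : is_derive (fun x => cross (phi (x,t)) (d_s phi (x,t)) k) s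
     (cross (d_s phi (s,t)) (d_s phi (s,t)) k + cross (phi (s,t)) (fun i => Derive (fun x => d_s phi (x,t) i) s) k)).
  { apply (cross_deriv (fun x => phi (x,t)) (fun x => d_s phi (x,t))); auto;
    intros i Hi; [apply ds0 | apply dss]; auto. }
  rewrite cross_self, Rplus_0_l in H.
  apply is_derive_unique. eapply is_derive_ext_loc; [| exact H].
  generalize (loc_s U HU s t Hz). apply filter_imp. intros x Hx.
  symmetry. apply cone_cross; auto.
Qed.

Lemma Ccross s t k : (k<7)%nat -> U (s,t) ->
  Derive (fun y => d_t phi (s,y) k) t = cross (d_t phi (s,t)) (d_s phi (s,t)) k +
     cross (phi (s,t)) (fun i => Derive (fun y => d_s phi (s,y) i) t) k.
Proof.
  intros Hk Hz.
  assert (H : is_derive (fun y => cross (phi (s,y)) (d_s phi (s,y)) k) t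
     (cross (d_t phi (s,t)) (d_s phi (s,t)) k + cross (phi (s,t)) (fun i => Derive (fun y => d_s phi (s,y) i) t) k)).
  { apply (cross_deriv (fun y => phi (s,y)) (fun y => d_s phi (s,y))); auto;
    intros i Hi; [apply dt0 | apply dts]; auto. }
  apply is_derive_unique. eapply is_derive_ext_loc; [| exact H].
  generalize (loc_t U HU s t Hz). apply filter_imp. intros y Hy.
  symmetry. apply cone_cross; auto.
Qed.

End S.

Theorem proposition6p8
  (U : C -> Prop) (phi : C -> vec7) (w : C -> C)
  (HU : open U)
  (Hsphere : forall z, U z -> norm7 (phi z) = 1)
  (Hanalytic : forall i, (i < 7)%nat -> real_analytic_on U (fun z => phi z i))
  (Hsmooth : forall i, (i < 7)%nat -> smooth_on U (fun z => phi z i))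
  (Hconf1 : forall z, U z -> dot7 (d_s phi z) (d_s phi z) = dot7 (d_t phi z) (d_t phi z))
  (Hconf2 : forall z, U z -> dot7 (d_s phi z) (d_t phi z) = 0)
  (Himm : forall z, U z -> dot7 (d_s phi z) (d_s phi z) > 0)
  (Horient : forall z, U z -> phi3 (phi z) (d_s phi z) (d_t phi z) > 0)
  (Hcone_imm : forall r z, U z -> r <> 0 -> immersion_at (fun r z i => r * phi z i) r z)
  (Hcone_assoc : associative_param (fun r z => U z /\ r <> 0) (fun r z i => r * phi z i))
  (Hw : holomorphic_on U w) :
  let psi := lie_deriv w phi in
  associative_param (fun r z => U z) (fun r z i => r * phi z i + psi z i)
  /\ (forall x, asymptotic_cone U phi psi x <-> cone_set U phi x).
Proof.
  intros psi. split.
  2: { intro x. unfold asymptotic_cone, cone_set. split; intro H; exact H. }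
  intros r [s t] Hz _.
  destruct (Hw (s,t) Hz) as [l Hl].
  destruct (holo_partials w (s,t) l Hl) as [Has [Hbs [Hat Hbt]]]. simpl in Has, Hbs, Hat, Hbt.
  assert (Er : forall i, pd_r (fun r z i => r * phi z i + psi z i) r (s,t) i = phi (s,t) i).
  { intro i. unfold pd_r. apply is_derive_unique. eapply deq; [dsolve | cbv beta; ring]. }
  assert (Es : forall i, (i<7)%nat -> pd_s (fun r z i => r * phi z i + psi z i) r (s,t) i =
     r * d_s phi (s,t) i + (fst l * d_s phi (s,t) i + fst (w (s,t)) * Derive (fun x => d_s phi (x,t) i) s
       + snd l * d_t phi (s,t) i + snd (w (s,t)) * Derive (fun x => d_t phi (x,t) i) s)).
  { intros i Hi.
    pose proof (ds0 U phi Hsmooth i s t Hi Hz). pose proof (dss U phi Hsmooth i s t Hi Hz).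
    pose proof (dst U phi Hsmooth i s t Hi Hz).
    assert (HD : is_derive (fun x => r * phi (x,t) i + (fst (w (x,t)) * d_s phi (x,t) i + snd (w (x,t)) * d_t phi (x,t) i)) s
     (r * d_s phi (s,t) i + (fst l * d_s phi (s,t) i + fst (w (s,t)) * Derive (fun x => d_s phi (x,t) i) s
       + snd l * d_t phi (s,t) i + snd (w (s,t)) * Derive (fun x => d_t phi (x,t) i) s))).
    { eapply deq; [dsolve | cbv beta; change (AbsRing.sort R_AbsRing) with R; ring]. }
    unfold pd_s. apply is_derive_unique. exact HD. }
  assert (Et : forall i, (i<7)%nat -> pd_t (fun r z i => r * phi z i + psi z i) r (s,t) i =
     r * d_t phi (s,t) i + (- snd l * d_s phi (s,t) i + fst (w (s,t)) * Derive (fun y => d_s phi (s,y) i) t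
       + fst l * d_t phi (s,t) i + snd (w (s,t)) * Derive (fun y => d_t phi (s,y) i) t)).
  { intros i Hi.
    pose proof (dt0 U phi Hsmooth i s t Hi Hz). pose proof (dts U phi Hsmooth i s t Hi Hz).
    pose proof (dtt U phi Hsmooth i s t Hi Hz).
    assert (HD : is_derive (fun y => r * phi (s,y) i + (fst (w (s,y)) * d_s phi (s,y) i + snd (w (s,y)) * d_t phi (s,y) i)) t
     (r * d_t phi (s,t) i + (- snd l * d_s phi (s,t) i + fst (w (s,t)) * Derive (fun y => d_s phi (s,y) i) t
       + fst l * d_t phi (s,t) i + snd (w (s,t)) * Derive (fun y => d_t phi (s,y) i) t))).
    { eapply deq; [dsolve | cbv beta; change (AbsRing.sort R_AbsRing) with R; ring]. }
    unfold pd_t. apply is_derive_unique. exact HD. }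
  rewrite (phi3_ext _ (phi (s,t)) _ (pd_s (fun r z i => r * phi z i + psi z i) r (s,t))
     _ (pd_t (fun r z i => r * phi z i + psi z i) r (s,t))) by (intros; auto).
  rewrite (gram3_ext _ (phi (s,t)) _ (pd_s (fun r z i => r * phi z i + psi z i) r (s,t))
     _ (pd_t (fun r z i => r * phi z i + psi z i) r (s,t))) by (intros; auto).
  apply final_alg with (mu := - snd (w (s,t)) * dot7 (d_s phi (s,t)) (d_s phi (s,t))).
  { apply (unit_U U phi Hsphere); auto. }
  intros i Hi.
  assert (He1 : dot7 (phi (s,t)) (d_s phi (s,t)) = 0) by (apply (orth_s U phi Hsmooth HU Hsphere); auto).
  assert (Hp : dot7 (phi (s,t)) (phi (s,t)) = 1) by (apply (unit_U U phi Hsphere); auto).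
  assert (CC : forall j, (j<7)%nat -> d_t phi (s,t) j = cross (phi (s,t)) (d_s phi (s,t)) j).
  { intros j Hj. apply (cone_cross U phi Hsmooth HU Hsphere Hconf1 Hconf2 Himm Hcone_imm Hcone_assoc); auto. }
  assert (SW : forall j, (j<7)%nat -> Derive (fun y => d_s phi (s,y) j) t = Derive (fun x => d_t phi (x,t) j) s).
  { intros j Hj. apply (schwarz_phi U phi Hsmooth HU); auto. }
  assert (X1 : cross (phi (s,t)) (d_s phi (s,t)) i = d_t phi (s,t) i) by (symmetry; apply CC; auto).
  assert (X2 : cross (phi (s,t)) (fun j => Derive (fun x => d_s phi (x,t) j) s) i = Derive (fun x => d_t phi (x,t) i) s).
  { symmetry. apply (Bcross U phi Hsmooth HU Hsphere Hconf1 Hconf2 Himm Hcone_imm Hcone_assoc); auto. }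
  assert (X3 : cross (phi (s,t)) (d_t phi (s,t)) i = - d_s phi (s,t) i).
  { rewrite (cross_ext _ (phi (s,t)) _ (cross (phi (s,t)) (d_s phi (s,t))) i) by auto.
    rewrite cross_double by auto. rewrite Hp, He1. ring. }
  assert (X4 : Derive (fun y => d_t phi (s,y) i) t =
     - dot7 (d_s phi (s,t)) (d_s phi (s,t)) * phi (s,t) i + cross (phi (s,t)) (fun j => Derive (fun x => d_t phi (x,t) j) s) i).
  { rewrite (Ccross U phi Hsmooth HU Hsphere Hconf1 Hconf2 Himm Hcone_imm Hcone_assoc) by auto.
    rewrite (cross_ext (d_t phi (s,t)) (cross (phi (s,t)) (d_s phi (s,t))) _ (d_s phi (s,t)) i) by auto.
    rewrite cross_double2 by auto. rewrite He1.
    rewrite (cross_ext _ (phi (s,t)) _ (fun j => Derive (fun x => d_t phi (x,t) j) s) i) by auto.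
    ring. }
  rewrite Et by auto.
  rewrite (cross_ext _ (phi (s,t)) _ (fun j => r * d_s phi (s,t) j + (fst l * d_s phi (s,t) j + fst (w (s,t)) * Derive (fun x => d_s phi (x,t) j) s
       + snd l * d_t phi (s,t) j + snd (w (s,t)) * Derive (fun x => d_t phi (x,t) j) s)) i) by auto.
  rewrite cross_lin5, X1, X2, X3, X4, SW by auto.
  ring.
Qed.
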